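(* Let $G$ be a group definable in some first-order structure, satisfying the descending chain condition on definable subgroups. Then: (a) every maximal nilpotent subgroup of $G$ is definable; (a') if $Q$ is a Cartan subgroup of $G$, then $Q$ is definable and $Q^\circ$ is a Carter subgroup of $G$; (b) if $Q$ is a Carter subgroup of $G$, then $Q$ is contained in a maximal nilpotent subgroup $\tilde Q$ of $G$, and every such $\tilde Q$ is a Cartan subgroup of $G$ with $\tilde Q^\circ=Q$.
   Context: The descending chain condition means every strictly descending chain of definable subgroups is finite. For a definable subgroup $H$, $H^\circ$ denotes the smallest definable subgroup of finite index in $H$ (it exists by the chain condition); $H$ is definably connected if $H=H^\circ$. A Cartan subgroup of $G$ is a maximal nilpotent subgroup $Q$ such that every normal finite-index subgroup $X$ of $Q$ has finite index in $N_G(X)$. A Carter subgroup of $G$ is a definable, definably connected, nilpotent subgroup $Q$ of finite index in $N_G(Q)$. *)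

(* Defs.v *)
From Stdlib Require Import List PeanoNat.
Import ListNotations.

Inductive formula (R : Type) : Type :=
  | Feq  : nat -> nat -> formula R
  | Frel : R -> list nat -> formula R
  | Fnot : formula R -> formula R
  | Fand : formula R -> formula R -> formula R
  | Fex  : nat -> formula R -> formula R.

Arguments Feq {R}. Arguments Frel {R}. Arguments Fnot {R}.
Arguments Fand {R}. Arguments Fex {R}.

Definition upd {M : Type} (v : nat -> M) (i : nat) (x : M) : nat -> M :=
  fun j => if Nat.eqb j i then x else v j.

Fixpoint sat {R M : Type} (I : R -> list M -> Prop) (v : nat -> M)
    (phi : formula R) : Prop :=
  match phi with
  | Feq i j => v i = v j
  | Frel r args => I r (map v args)
  | Fnot p => ~ sat I v p
  | Fand p q => sat I v p /\ sat I v q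
  | Fex i p => exists x, sat I (upd v i x) p
  end.

(** A group together with a first-order structure on its universe in which
    the graph of the multiplication is definable (with parameters). *)
Record DefGroup := {
  carrier :> Type;
  mul : carrier -> carrier -> carrier;
  inv : carrier -> carrier;
  one : carrier;
  mulA : forall x y z, mul x (mul y z) = mul (mul x y) z;
  mul1g : forall x, mul one x = x;
  mulVg : forall x, mul (inv x) x = one;
  rsym : Type;
  rint : rsym -> list carrier -> Prop;
  mul_definable : exists (phi : formula rsym) (p : nat -> carrier),
      forall x y z, mul x y = z <->
        sat rint (upd (upd (upd p 0 x) 1 y) 2 z) phi
}.

Section Defs.
Variable G : DefGroup.

Definition gset := G -> Prop.

Definition subset (A B : gset) : Prop := forall x, A x -> B x.
Definition seteq (A B : gset) : Prop := forall x, A x <-> B x.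

Definition definable (A : gset) : Prop :=
  exists (phi : formula (rsym G)) (p : nat -> G),
    forall x, A x <-> sat (rint G) (upd p 0 x) phi.

Definition subgroup (H : gset) : Prop :=
  H (one G) /\ (forall x y, H x -> H y -> H (mul G x y)) /\
  (forall x, H x -> H (inv G x)).

Definition def_subgroup (H : gset) : Prop := subgroup H /\ definable H.

Definition DCC : Prop :=
  ~ exists H : nat -> gset,
      (forall n, def_subgroup (H n)) /\
      (forall n, subset (H (S n)) (H n) /\ ~ subset (H n) (H (S n))).

(** K has finite index in H (K a subgroup contained in H): finitely many
    left cosets g K, g in H. *)
Definition finite_index (K H : gset) : Prop :=
  subset K H /\
  exists s : list G, (forall g, In g s -> H g) /\
    forall h, H h -> exists g, In g s /\ K (mul G (inv G g) h).

Definition conn_comp (H H0 : gset) : Prop :=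
  def_subgroup H0 /\ finite_index H0 H /\
  forall K, def_subgroup K -> finite_index K H -> subset H0 K.

Definition def_connected (H : gset) : Prop := conn_comp H H.

Definition conj (g x : G) : G := mul G (mul G g x) (inv G g).
Definition normalizer (X : gset) : gset :=
  fun g => forall x, X x <-> X (conj g x).

Definition normal_in (X H : gset) : Prop :=
  subset X H /\ forall h x, H h -> X x -> X (conj h x).

Definition gen (A : gset) : gset :=
  fun g => forall K, subgroup K -> subset A K -> K g.

Definition comm (x y : G) : G :=
  mul G (mul G (inv G x) (inv G y)) (mul G x y).

Fixpoint lcs (H : gset) (n : nat) : gset :=
  match n with
  | O => H
  | S n => gen (fun g => exists x y, lcs H n x /\ H y /\ g = comm x y)
  end.

Definition nilpotent (H : gset) : Prop :=
  exists n, forall g, lcs H n g -> g = one G.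

Definition max_nilpotent (Q : gset) : Prop :=
  subgroup Q /\ nilpotent Q /\
  forall K, subgroup K -> nilpotent K -> subset Q K -> subset K Q.

Definition Cartan (Q : gset) : Prop :=
  max_nilpotent Q /\
  forall X, subgroup X -> normal_in X Q -> finite_index X Q ->
    finite_index X (normalizer X).

Definition Carter (Q : gset) : Prop :=
  def_subgroup Q /\ def_connected Q /\ nilpotent Q /\
  finite_index Q (normalizer Q).

End Defs.

(* Main.v *)
Require Import Defs.
From Stdlib Require Import List PeanoNat Arith Lia Classical ClassicalEpsilon.
Import ListNotations.

Fixpoint ren {R} (f : nat -> nat) (phi : formula R) : formula R :=
  match phi with
  | Feq i j => Feq (f i) (f j)
  | Frel r l => Frel r (map f l)
  | Fnot p => Fnot (ren f p)
  | Fand p q => Fand (ren f p) (ren f q)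
  | Fex i p => Fex (f i) (ren f p)
  end.

Lemma sat_ext {R M} (I : R -> list M -> Prop) phi : forall v w,
  (forall j, v j = w j) -> (sat I v phi <-> sat I w phi).
Proof.
  induction phi; intros v w H; simpl.
  - rewrite !H; tauto.
  - rewrite (map_ext _ _ H); tauto.
  - rewrite (IHphi v w H); tauto.
  - rewrite (IHphi1 v w H), (IHphi2 v w H); tauto.
  - split; intros [x Hx]; exists x; (eapply IHphi; [|exact Hx]);
      intro j; unfold upd; destruct (Nat.eqb j n); auto.
Qed.

Lemma sat_ren {R M} (I : R -> list M -> Prop) (f : nat -> nat)
  (finj : forall a b, f a = f b -> a = b) phi : forall v,
  sat I v (ren f phi) <-> sat I (fun j => v (f j)) phi.
Proof.
  induction phi; intros v; simpl.
  - tauto.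
  - rewrite map_map; tauto.
  - rewrite IHphi; tauto.
  - rewrite IHphi1, IHphi2; tauto.
  - split; intros [x Hx]; exists x.
    + rewrite IHphi in Hx. eapply sat_ext; [|exact Hx].
      intro j; unfold upd. destruct (Nat.eqb_spec (f j) (f n)), (Nat.eqb_spec j n); subst; auto.
      apply finj in e; contradiction. contradiction.
    + rewrite IHphi. eapply sat_ext; [|exact Hx].
      intro j; unfold upd. destruct (Nat.eqb_spec (f j) (f n)), (Nat.eqb_spec j n); subst; auto.
      apply finj in e; contradiction. contradiction.
Qed.

Lemma par_ind (Q : nat -> Prop) : (forall k, Q (2*k)) -> (forall k, Q (2*k+1)) -> forall n, Q n.
Proof.
  intros H0 H1 n. rewrite (Nat.div2_odd n). destruct (Nat.odd n); simpl Nat.b2n.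
  apply H1. rewrite Nat.add_0_r. apply H0.
Qed.

Definition mix {M} (v p : nat -> M) (n : nat) : M :=
  if Nat.even n then v (Nat.div2 n) else p (Nat.div2 n).

Lemma mix_e {M} (v p : nat -> M) k : mix v p (2*k) = v k.
Proof. unfold mix. rewrite Nat.even_even, Nat.div2_double. auto. Qed.
Lemma mix_o {M} (v p : nat -> M) k : mix v p (2*k+1) = p k.
Proof. unfold mix. rewrite Nat.even_odd, Nat.div2_odd'. auto. Qed.

Definition pcase (a b : nat -> nat) (n : nat) : nat :=
  if Nat.even n then a (Nat.div2 n) else b (Nat.div2 n).
Lemma pcase_e a b k : pcase a b (2*k) = a k.
Proof. unfold pcase. rewrite Nat.even_even, Nat.div2_double. auto. Qed.
Lemma pcase_o a b k : pcase a b (2*k+1) = b k.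
Proof. unfold pcase. rewrite Nat.even_odd, Nat.div2_odd'. auto. Qed.

Lemma pcase_inj a b : (forall x y, a x = a y -> x = y) -> (forall x y, b x = b y -> x = y) ->
  (forall x y, a x <> b y) -> forall x y, pcase a b x = pcase a b y -> x = y.
Proof.
  intros Ha Hb Hab x y. revert y. pattern x; apply par_ind; intro k;
  intro y; pattern y; apply par_ind; intro l;
  rewrite ?pcase_e, ?pcase_o; intro E.
  - rewrite (Ha _ _ E); auto.
  - exfalso; eapply Hab; eauto.
  - exfalso; eapply Hab; eauto.
  - rewrite (Hb _ _ E); auto.
Qed.

Definition DP (G : DefGroup) (P : (nat -> G) -> Prop) : Prop :=
  exists (phi : formula (rsym G)) (p : nat -> G), forall v, P v <-> sat (rint G) (mix v p) phi.

Lemma DP_ext (G : DefGroup) (P Q : (nat -> G) -> Prop) : (forall v, P v <-> Q v) -> DP G P -> DP G Q.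
Proof. intros H [phi [p Hp]]. exists phi, p. intro v. rewrite <- H. apply Hp. Qed.

Lemma DP_not (G : DefGroup) P : DP G P -> DP G (fun v => ~ P v).
Proof. intros [phi [p Hp]]. exists (Fnot phi), p. intro v. simpl. rewrite Hp. tauto. Qed.

Lemma DP_and (G : DefGroup) P Q : DP G P -> DP G Q -> DP G (fun v => P v /\ Q v).
Proof.
  intros [phi1 [p1 H1]] [phi2 [p2 H2]].
  set (f1 := pcase (fun k => 2*k) (fun k => 2*(2*k)+1)).
  set (f2 := pcase (fun k => 2*k) (fun k => 2*(2*k+1)+1)).
  assert (i1 : forall x y, f1 x = f1 y -> x = y) by (apply pcase_inj; intros; lia).
  assert (i2 : forall x y, f2 x = f2 y -> x = y) by (apply pcase_inj; intros; lia).
  exists (Fand (ren f1 phi1) (ren f2 phi2)), (mix p1 p2).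
  intro v. simpl. rewrite (sat_ren _ _ i1), (sat_ren _ _ i2), H1, H2.
  split; intros [A B]; split; (eapply sat_ext; [|eassumption]); intro j; pattern j; apply par_ind;
   intro k; unfold f1, f2; rewrite ?pcase_e, ?pcase_o, ?mix_e, ?mix_o, ?mix_e; auto.
Qed.

Lemma DP_ex (G : DefGroup) Q i : DP G Q -> DP G (fun v => exists x, Q (upd v i x)).
Proof.
  intros [phi [p Hp]]. exists (Fex (2*i) phi), p. intro v. cbn [sat].
  split; intros [x Hx]; exists x; [rewrite Hp in Hx|rewrite Hp]; (eapply sat_ext; [|exact Hx]);
  intro j; pattern j; apply par_ind; intro k; unfold upd; rewrite ?mix_e, ?mix_o;
  destruct (Nat.eqb_spec (2*k) (2*i)), (Nat.eqb_spec k i); try lia; rewrite ?mix_e; auto;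
  destruct (Nat.eqb_spec (2*k+1) (2*i)); try lia; rewrite ?mix_o; auto.
Qed.

Lemma DP_eq (G : DefGroup) i j : DP G (fun v => v i = v j).
Proof. exists (Feq (2*i) (2*j)), (fun _ => one G). intro v; cbn [sat]. rewrite !mix_e. tauto. Qed.

Lemma DP_eqc (G : DefGroup) i c : DP G (fun v => v i = c).
Proof. exists (Feq (2*i) (2*0+1)), (fun _ => c). intro v; cbn [sat]. rewrite mix_e, mix_o. tauto. Qed.

Definition fmul (i j k n : nat) : nat :=
  match n with 0 => 2*i | 1 => 2*j | 2 => 2*k | S (S (S m)) => 2*m+1 end.

Lemma DP_mul (G : DefGroup) i j k : i <> j -> j <> k -> i <> k ->
  DP G (fun v => mul G (v i) (v j) = v k).
Proof.
  intros ij jk ik. destruct (mul_definable G) as [phi [p0 Hp]].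
  assert (inj : forall x y, fmul i j k x = fmul i j k y -> x = y).
  { intros [|[|[|x]]] [|[|[|y]]]; simpl; intros; lia. }
  exists (ren (fmul i j k) phi), (fun n => p0 (S (S (S n)))).
  intro v. rewrite (sat_ren _ _ inj), Hp. apply sat_ext.
  intros [|[|[|m]]]; cbn [fmul]; rewrite ?mix_e, ?mix_o; unfold upd; simpl; reflexivity.
Qed.

Lemma DP_of_def G (A : gset G) i : definable G A -> DP G (fun v => A (v i)).
Proof.
  intros [phi [p0 Hp]].
  set (f := fun n => match n with 0 => 2*i | S m => 2*m+1 end).
  assert (inj : forall x y, f x = f y -> x = y) by (intros [|x] [|y]; simpl; intros; lia).
  exists (ren f phi), (fun m => p0 (S m)).
  intro v. rewrite (sat_ren _ _ inj), Hp. apply sat_ext.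
  intros [|m]; unfold f; cbn beta iota; rewrite ?mix_e, ?mix_o; unfold upd; simpl; reflexivity.
Qed.

Lemma def_of_DP (G : DefGroup) (A : gset G) P : DP G P -> (forall v, P v <-> A (v 0)) -> definable G A.
Proof.
  intros [phi [p Hp]] HA.
  set (f := fun n => match n with 0 => 0 | S m => S (S m) end).
  assert (inj : forall x y, f x = f y -> x = y) by (intros [|x] [|y]; simpl; intros; lia).
  exists (ren f phi), (fun m => mix (fun _ => one G) p (pred m)).
  intro x. rewrite (sat_ren _ _ inj).
  set (vx := fun n : nat => match n with 0 => x | _ => one G end).
  transitivity (P vx). { rewrite HA. unfold vx. tauto. }
  rewrite Hp. apply sat_ext.
  intros [|m]; simpl f.
  - unfold mix. simpl. reflexivity.
  - unfold upd. simpl. unfold mix. destruct (Nat.even (S m)) eqn:E; auto.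
    unfold vx. destruct (Nat.div2 (S m)) eqn:D; auto.
    destruct m. discriminate. simpl in D. discriminate.
Qed.

Lemma upd_eq {M} (v : nat -> M) i x : upd v i x i = x.
Proof. unfold upd. rewrite Nat.eqb_refl. auto. Qed.
Lemma upd_ne {M} (v : nat -> M) i x j : j <> i -> upd v i x j = v j.
Proof. intro H. unfold upd. apply Nat.eqb_neq in H. rewrite H. auto. Qed.

Lemma mulgV (G : DefGroup) (x : G) : mul G x (inv G x) = one G.
Proof.
  rewrite <- (mul1g G (mul G x (inv G x))).
  rewrite <- (mulVg G (inv G x)) at 1.
  rewrite <- mulA. rewrite (mulA G (inv G x) x (inv G x)). rewrite mulVg, mul1g.
  apply mulVg.
Qed.
Lemma mulg1 (G : DefGroup) (x : G) : mul G x (one G) = x.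
Proof. rewrite <- (mulVg G x), mulA, mulgV, mul1g. auto. Qed.
Lemma mulg_lcancel (G : DefGroup) (a x y : G) : mul G a x = mul G a y -> x = y.
Proof.
  intro H. rewrite <- (mul1g G x), <- (mul1g G y), <- (mulVg G a), <- !mulA, H. auto.
Qed.
Lemma inv_uniq (G : DefGroup) (x y : G) : mul G y x = one G -> y = inv G x.
Proof.
  intro H. rewrite <- (mulg1 G y), <- (mulgV G x), mulA, H, mul1g. auto.
Qed.
Lemma invK (G : DefGroup) (x : G) : inv G (inv G x) = x.
Proof. symmetry. apply inv_uniq. apply mulgV. Qed.
Lemma invM (G : DefGroup) (x y : G) : inv G (mul G x y) = mul G (inv G y) (inv G x).
Proof.
  symmetry. apply inv_uniq. rewrite <- mulA, (mulA G (inv G x)), mulVg, mul1g, mulVg. auto.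
Qed.
Lemma inv1 (G : DefGroup) : inv G (one G) = one G.
Proof. symmetry. apply inv_uniq. apply mul1g. Qed.

Inductive term (G : DefGroup) :=
  | Tv (i : nat) | Tc (c : G) | Tm (a b : term G) | Ti (a : term G).
Arguments Tv {G}. Arguments Tc {G}. Arguments Tm {G}. Arguments Ti {G}.

Fixpoint teval (G : DefGroup) (v : nat -> G) (t : term G) : G :=
  match t with
  | Tv i => v i
  | Tc c => c
  | Tm a b => mul G (teval G v a) (teval G v b)
  | Ti a => inv G (teval G v a)
  end.

Fixpoint tbound {G : DefGroup} (t : term G) (n : nat) : Prop :=
  match t with
  | Tv i => i < n
  | Tc _ => True
  | Tm a b => tbound a n /\ tbound b n
  | Ti a => tbound a n
  end.

Lemma teval_ext (G : DefGroup) t n : tbound t n -> forall v w,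
  (forall i, i < n -> v i = w i) -> teval G v t = teval G w t.
Proof.
  induction t; simpl; intros Hb v w H; auto.
  - destruct Hb. rewrite (IHt1 H0 v w H), (IHt2 H1 v w H); auto.
  - rewrite (IHt Hb v w H); auto.
Qed.

Lemma tbound_mono {G : DefGroup} (t : term G) n m : tbound t n -> n <= m -> tbound t m.
Proof. induction t; simpl; intuition lia. Qed.

Lemma DP_teq (G : DefGroup) t : forall n, tbound t n -> forall k, n <= k ->
  DP G (fun v => teval G v t = v k).
Proof.
  induction t; simpl; intros n Hb k Hk.
  - apply DP_eq.
  - eapply DP_ext; [|apply (DP_eqc G k c)]. intro v; simpl; split; auto.
  - destruct Hb as [Ha Hb'].
    set (Q2 := fun u : nat -> G => (teval G u t1 = u (k+1) /\ teval G u t2 = u (k+2)) /\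
               mul G (u (k+1)) (u (k+2)) = u k).
    assert (D2 : DP G Q2).
    { apply DP_and. apply DP_and. apply (IHt1 n); auto; lia. apply (IHt2 n); auto; lia.
      apply DP_mul; lia. }
    apply (DP_ex _ _ (k+2)) in D2. apply (DP_ex _ _ (k+1)) in D2.
    eapply DP_ext; [|exact D2]. intro v. simpl. unfold Q2.
    assert (U : forall x y, upd (upd v (k+1) x) (k+2) y (k+1) = x /\
       upd (upd v (k+1) x) (k+2) y (k+2) = y /\ upd (upd v (k+1) x) (k+2) y k = v k).
    { intros x y. rewrite upd_eq, (upd_ne _ (k+2) _ (k+1)), upd_eq, !upd_ne by lia. auto. }
    assert (E : forall x y, forall t, tbound t n ->
      teval G (upd (upd v (k+1) x) (k+2) y) t = teval G v t).
    { intros x y t Ht. apply (teval_ext G t n Ht). intros i Hi.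
      rewrite !upd_ne by lia. auto. }
    split.
    + intros [x [y [[E1 E2] E3]]]. destruct (U x y) as [U1 [U2 U3]].
      rewrite U1, U2, U3 in *. rewrite E in E1, E2 by auto. subst. auto.
    + intro H. exists (teval G v t1), (teval G v t2).
      destruct (U (teval G v t1) (teval G v t2)) as [U1 [U2 U3]].
      rewrite U1, U2, U3. rewrite !E by auto. auto.
  - set (Q2 := fun u : nat -> G => (teval G u t = u (k+1) /\ u (k+2) = one G) /\
               mul G (u k) (u (k+1)) = u (k+2)).
    assert (D2 : DP G Q2).
    { apply DP_and. apply DP_and. apply (IHt n); auto; lia. apply DP_eqc.
      apply DP_mul; lia. }
    apply (DP_ex _ _ (k+2)) in D2. apply (DP_ex _ _ (k+1)) in D2.
    eapply DP_ext; [|exact D2]. intro v. simpl. unfold Q2.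
    assert (U : forall x y, upd (upd v (k+1) x) (k+2) y (k+1) = x /\
       upd (upd v (k+1) x) (k+2) y (k+2) = y /\ upd (upd v (k+1) x) (k+2) y k = v k).
    { intros x y. rewrite upd_eq, (upd_ne _ (k+2) _ (k+1)), upd_eq, !upd_ne by lia. auto. }
    assert (E : forall x y, teval G (upd (upd v (k+1) x) (k+2) y) t = teval G v t).
    { intros x y. apply (teval_ext G t n Hb). intros i Hi.
      rewrite !upd_ne by lia. auto. }
    split.
    + intros [x [y [[E1 E2] E3]]]. destruct (U x y) as [U1 [U2 U3]].
      rewrite U1, U2, U3 in *. rewrite E in E1. subst.
      symmetry. apply inv_uniq. auto.
    + intro H. exists (teval G v t), (one G).
      destruct (U (teval G v t) (one G)) as [U1 [U2 U3]].
      rewrite U1, U2, U3. rewrite E. split; auto.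
      rewrite <- H. apply mulVg.
Qed.

Lemma DP_app (G : DefGroup) (A : gset G) t n : definable G A -> tbound t n ->
  DP G (fun v => A (teval G v t)).
Proof.
  intros HA Hb.
  assert (D : DP G (fun u => teval G u t = u n /\ A (u n))).
  { apply DP_and. apply (DP_teq G t n Hb); lia. apply DP_of_def; auto. }
  apply (DP_ex _ _ n) in D. eapply DP_ext; [|exact D]. intro v. simpl.
  assert (E : forall x, teval G (upd v n x) t = teval G v t).
  { intro x. apply (teval_ext G t n Hb). intros i Hi. rewrite upd_ne by lia. auto. }
  split.
  - intros [x [E1 E2]]. rewrite upd_eq in *. rewrite E in E1. subst. auto.
  - intro H. exists (teval G v t). rewrite upd_eq, E. auto.
Qed.

Lemma def_app1 (G : DefGroup) (A : gset G) t : definable G A -> tbound t 1 ->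
  definable G (fun x => A (teval G (fun _ => x) t)).
Proof.
  intros HA Hb. eapply def_of_DP. apply (DP_app G A t 1 HA Hb).
  intro v. simpl. rewrite (teval_ext G t 1 Hb v (fun _ => v 0)); [tauto|].
  intros i Hi. f_equal. lia.
Qed.

Lemma DP_or (G : DefGroup) P Q : DP G P -> DP G Q -> DP G (fun v => P v \/ Q v).
Proof.
  intros HP HQ. eapply DP_ext; [|apply DP_not, DP_and; apply DP_not; [exact HP|exact HQ]].
  intro v; simpl. destruct (classic (P v)); tauto.
Qed.
Lemma DP_iff (G : DefGroup) P Q : DP G P -> DP G Q -> DP G (fun v => P v <-> Q v).
Proof.
  intros HP HQ. eapply DP_ext; [|apply DP_or; apply DP_and;
     [exact HP | exact HQ | apply DP_not; exact HP | apply DP_not; exact HQ]].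
  intro v; simpl. destruct (classic (P v)); tauto.
Qed.
Lemma DP_all (G : DefGroup) Q i : DP G Q -> DP G (fun v => forall x, Q (upd v i x)).
Proof.
  intros HQ. eapply DP_ext; [|apply DP_not, DP_ex, DP_not; exact HQ].
  intro v; simpl. split.
  - intros H x. apply NNPP. intro Hn. apply H. eauto.
  - intros H [x Hx]. auto.
Qed.

Lemma def_inter (G : DefGroup) (A B : gset G) : definable G A -> definable G B ->
  definable G (fun x => A x /\ B x).
Proof.
  intros HA HB. eapply def_of_DP. apply DP_and; [apply (DP_of_def G A 0 HA)|apply (DP_of_def G B 0 HB)].
  intro v; tauto.
Qed.

Lemma def_one (G : DefGroup) : definable G (fun x => x = one G).
Proof. eapply def_of_DP. apply (DP_eqc G 0 (one G)). intro v; tauto. Qed.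

Lemma def_conj (G : DefGroup) (A : gset G) g : definable G A ->
  definable G (fun x => A (conj G g x)).
Proof.
  intro HA. apply (def_app1 G A (Tm (Tm (Tc g) (Tv 0)) (Ti (Tc g))) HA). simpl. lia.
Qed.

Lemma def_commr (G : DefGroup) (A : gset G) x : definable G A ->
  definable G (fun y => A (comm G x y)).
Proof.
  intro HA. apply (def_app1 G A (Tm (Tm (Ti (Tc x)) (Ti (Tv 0))) (Tm (Tc x) (Tv 0))) HA).
  simpl. lia.
Qed.

Lemma def_comml (G : DefGroup) (A : gset G) y : definable G A ->
  definable G (fun x => A (comm G x y)).
Proof.
  intro HA. apply (def_app1 G A (Tm (Tm (Ti (Tv 0)) (Ti (Tc y))) (Tm (Tv 0) (Tc y))) HA).
  simpl. lia.
Qed.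

Lemma def_norm (G : DefGroup) (X : gset G) : definable G X -> definable G (normalizer G X).
Proof.
  intro HX.
  set (t := @Tm G (Tm (Tv 0) (Tv 1)) (Ti (Tv 0))).
  assert (D : DP G (fun u => X (u 1) <-> X (teval G u t))).
  { apply DP_iff. apply DP_of_def; auto. apply (DP_app G X t 2 HX). simpl. lia. }
  apply (DP_all _ _ 1) in D. eapply def_of_DP; [exact D|].
  intro v. unfold normalizer. simpl.
  split; intros H x; specialize (H x); rewrite upd_eq, (upd_ne v 1 _ 0) in * by lia; exact H.
Qed.

Lemma mulgKV (G : DefGroup) (a x : G) : mul G (mul G a x) (inv G x) = a.
Proof. rewrite <- mulA, mulgV, mulg1. auto. Qed.
Lemma mulgVK (G : DefGroup) (a x : G) : mul G (mul G a (inv G x)) x = a.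
Proof. rewrite <- mulA, mulVg, mulg1. auto. Qed.

Ltac gsimpl := unfold conj, comm in *;
  repeat progress rewrite ?invM, ?invK, ?inv1, ?mulA, ?mulgKV, ?mulgVK, ?mulgV, ?mulVg, ?mul1g, ?mulg1.

Lemma conj_mul (G : DefGroup) (g x y : G) : conj G g (mul G x y) = mul G (conj G g x) (conj G g y).
Proof. gsimpl. auto. Qed.
Lemma conj_inv (G : DefGroup) (g x : G) : conj G g (inv G x) = inv G (conj G g x).
Proof. gsimpl. auto. Qed.
Lemma conj_one (G : DefGroup) (g : G) : conj G g (one G) = one G.
Proof. gsimpl. auto. Qed.
Lemma conj_comp (G : DefGroup) (g h x : G) : conj G g (conj G h x) = conj G (mul G g h) x.
Proof. gsimpl. auto. Qed.
Lemma conj1 (G : DefGroup) (x : G) : conj G (one G) x = x.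
Proof. gsimpl. auto. Qed.
Lemma conjVK (G : DefGroup) (g x : G) : conj G (inv G g) (conj G g x) = x.
Proof. gsimpl. auto. Qed.
Lemma conjKV (G : DefGroup) (g x : G) : conj G g (conj G (inv G g) x) = x.
Proof. gsimpl. auto. Qed.
Lemma conj_comm (G : DefGroup) (g x y : G) : conj G g (comm G x y) = comm G (conj G g x) (conj G g y).
Proof. gsimpl. auto. Qed.
Lemma conj_as_comm (G : DefGroup) (a z : G) : conj G a z = mul G z (inv G (comm G (inv G a) z)).
Proof. gsimpl. auto. Qed.
Lemma comm_mulr (G : DefGroup) (x y z : G) :
  comm G x (mul G y z) = mul G (comm G x z) (conj G (inv G z) (comm G x y)).
Proof. gsimpl. auto. Qed.
Lemma comm_invr (G : DefGroup) (x y : G) : comm G x (inv G y) = conj G y (inv G (comm G x y)).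
Proof. gsimpl. auto. Qed.
Lemma comm_mull (G : DefGroup) (x w y : G) :
  comm G (mul G x w) y = mul G (conj G (inv G w) (comm G x y)) (comm G w y).
Proof. gsimpl. auto. Qed.
Lemma comm_invl (G : DefGroup) (x y : G) : comm G (inv G x) y = conj G x (inv G (comm G x y)).
Proof. gsimpl. auto. Qed.
Lemma comm1r (G : DefGroup) (x : G) : comm G x (one G) = one G.
Proof. gsimpl. auto. Qed.
Lemma comm1l (G : DefGroup) (x : G) : comm G (one G) x = one G.
Proof. gsimpl. auto. Qed.
Lemma coset_step (G : DefGroup) (a g h : G) :
  mul G (inv G g) h = mul G (inv G (mul G (inv G a) g)) (mul G (inv G a) h).
Proof. gsimpl. auto. Qed.

Lemma sg_one (G : DefGroup) H : subgroup G H -> H (one G).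
Proof. intros [a _]; auto. Qed.
Lemma sg_mul (G : DefGroup) H x y : subgroup G H -> H x -> H y -> H (mul G x y).
Proof. intros [_ [a _]]; auto. Qed.
Lemma sg_inv (G : DefGroup) H x : subgroup G H -> H x -> H (inv G x).
Proof. intros [_ [_ a]]; auto. Qed.
Lemma sg_invE (G : DefGroup) H x : subgroup G H -> H (inv G x) -> H x.
Proof. intros S Hx. rewrite <- (invK G x). apply sg_inv; auto. Qed.

Ltac sg := repeat match goal with
  | |- subgroup _ _ => assumption
  | |- _ (mul _ _ _) => apply sg_mul
  | |- _ (inv _ _) => apply sg_inv
  | |- _ (one _) => apply sg_one
  end; try assumption.

Lemma sg_inter (G : DefGroup) A B : subgroup G A -> subgroup G B ->
  subgroup G (fun x => A x /\ B x).
Proof.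
  intros SA SB. split; [|split].
  - split; apply sg_one; auto.
  - intros x y [? ?] [? ?]; split; apply sg_mul; auto.
  - intros x [? ?]; split; apply sg_inv; auto.
Qed.
Lemma dsg_inter (G : DefGroup) A B : def_subgroup G A -> def_subgroup G B ->
  def_subgroup G (fun x => A x /\ B x).
Proof. intros [SA DA] [SB DB]. split. apply sg_inter; auto. apply def_inter; auto. Qed.

Lemma sg_conj (G : DefGroup) H g : subgroup G H -> subgroup G (fun x => H (conj G g x)).
Proof.
  intros S. split; [|split]; intros.
  - rewrite conj_one. apply sg_one; auto.
  - rewrite conj_mul. apply sg_mul; auto.
  - rewrite conj_inv. apply sg_inv; auto.
Qed.
Lemma dsg_conj (G : DefGroup) H g : def_subgroup G H -> def_subgroup G (fun x => H (conj G g x)).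
Proof. intros [S D]. split. apply sg_conj; auto. apply def_conj; auto. Qed.

Lemma norm_sg (G : DefGroup) X : subgroup G (normalizer G X).
Proof.
  unfold normalizer. split; [|split].
  - intro x. rewrite conj1. tauto.
  - intros g h Hg Hh x. rewrite <- conj_comp. rewrite (Hh x). apply Hg.
  - intros g Hg x. rewrite (Hg (conj G (inv G g) x)). rewrite conjKV. tauto.
Qed.

Lemma sg_in_norm (G : DefGroup) X : subgroup G X -> subset G X (normalizer G X).
Proof.
  intros S g Hg x. unfold conj. split; intro Hx.
  - sg.
  - assert (E : x = mul G (mul G (inv G g) (mul G (mul G g x) (inv G g))) g) by (gsimpl; auto).
    rewrite E. apply sg_mul; auto. apply sg_mul; auto. apply sg_inv; auto.
Qed.

Lemma setT_def (G : DefGroup) : def_subgroup G (fun _ => True).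
Proof.
  split. split; auto. eapply def_of_DP. apply (DP_eq G 0 0). intro v. tauto.
Qed.

Lemma choose_list (A B : Type) (R : A -> B -> Prop) (l : list A) :
  (forall a, In a l -> exists b, R a b) ->
  exists s : list B, (forall a, In a l -> exists b, In b s /\ R a b) /\
    (forall b, In b s -> exists a, In a l /\ R a b).
Proof.
  induction l as [|a l IH]; intro H.
  - exists []. simpl. split; intros; tauto.
  - destruct (H a (or_introl eq_refl)) as [b Hb].
    destruct IH as [s [H1 H2]]. { intros; apply H; simpl; auto. }
    exists (b :: s). split.
    + intros a' [E|Ia]. subst. exists b; simpl; auto.
      destruct (H1 a' Ia) as [b' [? ?]]. exists b'; simpl; auto.
    + intros b' [E|Ib]. subst. exists a; simpl; auto.
      destruct (H2 b' Ib) as [a' [? ?]]. exists a'; simpl; auto.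
Qed.

Lemma fi_refl (G : DefGroup) H : subgroup G H -> finite_index G H H.
Proof.
  intro S. split. intros x; auto. exists [one G]. split.
  - intros g [E|[]]; subst; apply sg_one; auto.
  - intros h Hh. exists (one G). simpl. split; auto. rewrite inv1, mul1g; auto.
Qed.

Lemma fi_inter (G : DefGroup) H K1 K2 : subgroup G H -> subgroup G K1 -> subgroup G K2 ->
  finite_index G K1 H -> finite_index G K2 H -> finite_index G (fun x => K1 x /\ K2 x) H.
Proof.
  intros SH S1 S2 [sub1 [s1 [in1 cov1]]] [sub2 [s2 [in2 cov2]]].
  destruct (choose_list (G * G) G (fun p g => H g /\
     ((exists h, H h /\ K1 (mul G (inv G (fst p)) h) /\ K2 (mul G (inv G (snd p)) h)) ->
      K1 (mul G (inv G (fst p)) g) /\ K2 (mul G (inv G (snd p)) g))) (list_prod s1 s2))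
    as [s [Hs1 Hs2]].
  { intros [g1 g2] _. destruct (classic (exists h, H h /\ K1 (mul G (inv G g1) h) /\ K2 (mul G (inv G g2) h))) as [[h Hh]|N].
    - exists h. simpl. split; [tauto|]. intros _; tauto.
    - exists (one G). split. apply sg_one; auto. intro E; contradiction. }
  split. intros x [a _]; auto.
  exists s. split.
  - intros g Ig. destruct (Hs2 g Ig) as [p [_ [Hg _]]]; auto.
  - intros h Hh. destruct (cov1 h Hh) as [g1 [I1 K1h]]. destruct (cov2 h Hh) as [g2 [I2 K2h]].
    destruct (Hs1 (g1, g2)) as [g [Ig [Hg Hr]]]. apply in_prod; auto.
    simpl in Hr. destruct Hr as [Ka Kb]. { exists h; auto. }
    exists g. split; auto. split.
    rewrite (coset_step G g1 g h). apply sg_mul; auto; apply sg_inv; auto.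
    rewrite (coset_step G g2 g h). apply sg_mul; auto; apply sg_inv; auto.
Qed.

Lemma fi_restrict (G : DefGroup) K H L : subgroup G K -> subgroup G L ->
  finite_index G K H -> subset G L H -> finite_index G (fun x => K x /\ L x) L.
Proof.
  intros SK SL [subK [s [ins cov]]] LH.
  destruct (choose_list G G (fun a g => L g /\
     ((exists h, L h /\ K (mul G (inv G a) h)) -> K (mul G (inv G a) g))) s) as [s' [Hs1 Hs2]].
  { intros a _. destruct (classic (exists h, L h /\ K (mul G (inv G a) h))) as [[h Hh]|N].
    - exists h. split; [tauto|]. intros _; tauto.
    - exists (one G). split. apply sg_one; auto. intro E; contradiction. }
  split. intros x [a b]; auto.
  exists s'. split.
  - intros g Ig. destruct (Hs2 g Ig) as [p [_ [Hg _]]]; auto.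
  - intros h Hh. destruct (cov h (LH h Hh)) as [a [Ia Ka]].
    destruct (Hs1 a Ia) as [g [Ig [Hg Hr]]]. specialize (Hr (ex_intro _ h (Logic.conj Hh Ka))).
    exists g. split; auto. split.
    rewrite (coset_step G a g h). apply sg_mul; auto; apply sg_inv; auto.
    apply sg_mul; auto; apply sg_inv; auto.
Qed.

Lemma fi_sub (G : DefGroup) K H L : subgroup G K -> subgroup G L -> subset G K L ->
  finite_index G K H -> subset G L H -> finite_index G K L.
Proof.
  intros SK SL KL F LH. destruct (fi_restrict G K H L SK SL F LH) as [_ [s [ins cov]]].
  split; auto. exists s. split; auto. intros h Hh. destruct (cov h Hh) as [g [? [? ?]]]. eauto.
Qed.

Lemma fi_super (G : DefGroup) K K' H : finite_index G K H -> subset G K K' -> subset G K' H ->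
  finite_index G K' H.
Proof.
  intros [_ [s [ins cov]]] KK KH. split; auto. exists s. split; auto.
  intros h Hh. destruct (cov h Hh) as [g [? ?]]. eauto.
Qed.

Lemma fi_trans (G : DefGroup) K M H : subgroup G H -> finite_index G K M -> finite_index G M H ->
  finite_index G K H.
Proof.
  intros SH [KM [sM [inM covM]]] [MH [sH [inH covH]]].
  split. intros x Kx; auto.
  exists (map (fun p => mul G (fst p) (snd p)) (list_prod sH sM)). split.
  - intros g Ig. apply in_map_iff in Ig. destruct Ig as [[a b] [E Ip]]. subst.
    apply in_prod_iff in Ip. destruct Ip. simpl. apply sg_mul; auto.
  - intros h Hh. destruct (covH h Hh) as [a [Ia Ma]]. destruct (covM _ Ma) as [b [Ib Kb]].
    exists (mul G a b). split.
    + apply in_map_iff. exists (a, b). split; auto. apply in_prod; auto.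
    + replace (mul G (inv G (mul G a b)) h) with (mul G (inv G b) (mul G (inv G a) h)); auto.
      gsimpl; auto.
Qed.

Lemma fi_conj (G : DefGroup) K H g : subgroup G H -> subgroup G K -> normalizer G H g ->
  finite_index G K H -> finite_index G (fun x => K (conj G (inv G g) x)) H.
Proof.
  intros SH SK Ng [KH [s [ins cov]]].
  assert (Ngi : normalizer G H (inv G g)) by (apply sg_inv; auto; apply norm_sg).
  split.
  - intros x Kx. apply KH in Kx. apply (Ngi x). auto.
  - exists (map (conj G g) s). split.
    + intros b Ib. apply in_map_iff in Ib. destruct Ib as [a [E Ia]]. subst.
      apply (Ng a). auto.
    + intros h Hh. destruct (cov (conj G (inv G g) h)) as [a [Ia Ka]].
      { apply (Ngi h). auto. }
      exists (conj G g a). split. apply in_map; auto.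
      rewrite conj_mul, conj_inv, conjVK. auto.
Qed.

Lemma conn_norm (G : DefGroup) H Q0 g : subgroup G H -> conn_comp G H Q0 -> normalizer G H g ->
  normalizer G Q0 g.
Proof.
  intros SH [[SQ DQ] [FQ Qmin]] Ng.
  assert (Ngi : normalizer G H (inv G g)) by (apply sg_inv; auto; apply norm_sg).
  assert (A1 : forall x, Q0 x -> Q0 (conj G (inv G g) x)).
  { apply (Qmin (fun x => Q0 (conj G (inv G g) x))). apply dsg_conj; split; auto.
    apply fi_conj; auto. }
  assert (A2 : forall x, Q0 x -> Q0 (conj G g x)).
  { intros x Qx. rewrite <- (invK G g). apply (Qmin (fun x => Q0 (conj G (inv G (inv G g)) x))); auto.
    apply dsg_conj; split; auto. apply fi_conj; auto. }
  intro x. split; auto. intro Hx. apply A1 in Hx. rewrite conjVK in Hx. auto.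
Qed.

Lemma dcc_min (G : DefGroup) (hdcc : DCC G) (F : gset G -> Prop) :
  (forall H, F H -> def_subgroup G H) -> (exists H, F H) ->
  exists M, F M /\ forall K, F K -> subset G K M -> subset G M K.
Proof.
  intros HF [H0 F0]. apply NNPP; intro N.
  assert (step : forall M, F M -> exists K, F K /\ subset G K M /\ ~ subset G M K).
  { intros M FM. apply NNPP; intro N2. apply N. exists M. split; auto.
    intros K FK KM. apply NNPP; intro N3. apply N2. exists K; auto. }
  set (T := {H : gset G | F H}).
  set (stepf := fun t : T => let e := constructive_indefinite_description _ (step _ (proj2_sig t)) in
      exist (fun H => F H) (proj1_sig e) (proj1 (proj2_sig e)) : T).
  set (c := fun n => Nat.iter n stepf (exist _ H0 F0)).
  apply hdcc. exists (fun n => proj1_sig (c n)). split.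
  - intro n. apply HF. apply (proj2_sig (c n)).
  - intro n. change (c (S n)) with (stepf (c n)). unfold stepf. simpl.
    destruct (constructive_indefinite_description _ _) as [K [FK [A B]]]. simpl. auto.
Qed.

Lemma hull (G : DefGroup) (hdcc : DCC G) (X : gset G) :
  exists D, def_subgroup G D /\ subset G X D /\
    forall K, def_subgroup G K -> subset G X K -> subset G D K.
Proof.
  destruct (dcc_min G hdcc (fun H => def_subgroup G H /\ subset G X H)) as [M [[DM XM] Mmin]].
  - intros H [A _]; auto.
  - exists (fun _ => True). split. apply setT_def. intros x _; auto.
  - exists M. split; auto. split; auto. intros K DK XK x Mx.
    assert (E := Mmin (fun x => M x /\ K x)). simpl in E.
    refine (proj2 (E _ _ x Mx)).
    + split. apply dsg_inter; auto. intros y Xy; split; auto.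
    + intros y [? ?]; auto.
Qed.

Lemma conn_exists (G : DefGroup) (hdcc : DCC G) (H : gset G) : def_subgroup G H ->
  exists H0, conn_comp G H H0.
Proof.
  intros [SH DH].
  destruct (dcc_min G hdcc (fun K => def_subgroup G K /\ finite_index G K H)) as [M [[DM FM] Mmin]].
  - intros K [A _]; auto.
  - exists H. split. split; auto. apply fi_refl; auto.
  - exists M. split; auto. split; auto. intros K DK FK x Mx.
    assert (E := Mmin (fun x => M x /\ K x)). simpl in E.
    refine (proj2 (E _ _ x Mx)).
    + split. apply dsg_inter; auto. apply fi_inter; auto. apply DM. apply DK.
    + intros y [? ?]; auto.
Qed.

Lemma gen_sub (G : DefGroup) A K : subgroup G K -> subset G A K -> subset G (gen G A) K.
Proof. intros S AK x Hx. apply Hx; auto. Qed.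
Lemma gen_incl (G : DefGroup) A x : A x -> gen G A x.
Proof. intros Ax K S AK. auto. Qed.
Lemma gen_sg (G : DefGroup) A : subgroup G (gen G A).
Proof.
  split; [|split]; unfold gen; intros.
  - apply sg_one; auto.
  - apply sg_mul; auto. apply H; auto. apply H0; auto.
  - apply sg_inv; auto. apply H; auto.
Qed.

Lemma lcs_sg (G : DefGroup) H n : subgroup G H -> subgroup G (lcs G H n).
Proof. destruct n; simpl; auto. intros; apply gen_sg. Qed.

Lemma lcs_sub (G : DefGroup) H n : subgroup G H -> subset G (lcs G H n) H.
Proof.
  intro S. induction n; simpl. intros x; auto.
  apply gen_sub; auto. intros g [x [y [Lx [Hy E]]]]. subst. unfold comm.
  apply IHn in Lx. sg.
Qed.

Lemma lcs_mono (G : DefGroup) K H n : subset G K H -> subset G (lcs G K n) (lcs G H n).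
Proof.
  intro KH. induction n; simpl; auto.
  intros g Hg L SL AL. apply Hg; auto. intros a [x [y [Lx [Ky E]]]]. apply AL.
  exists x, y; auto.
Qed.

Lemma comm_lcs (G : DefGroup) H n x y : lcs G H n x -> H y -> lcs G H (S n) (comm G x y).
Proof. intros. simpl. apply gen_incl. eauto. Qed.

Lemma lcs_norm (G : DefGroup) H n h x : subgroup G H -> H h -> lcs G H n x -> lcs G H n (conj G h x).
Proof.
  intros S Hh. revert x. induction n; simpl; intros x Lx.
  - unfold conj; sg.
  - set (A := fun g => exists x0 y, lcs G H n x0 /\ H y /\ g = comm G x0 y).
    apply (gen_sub G A (fun x => gen G A (conj G h x))); auto.
    + apply sg_conj, gen_sg.
    + intros g [a [b [La [Hb E]]]]. subst. rewrite conj_comm. apply gen_incl.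
      exists (conj G h a), (conj G h b). split; auto. split; auto. unfold conj; sg.
Qed.

Lemma nil_sub (G : DefGroup) K H : nilpotent G H -> subset G K H -> nilpotent G K.
Proof. intros [n Hn] KH. exists n. intros g Lg. apply Hn. eapply lcs_mono; eauto. Qed.

Lemma first_fail (P : nat -> Prop) n : ~ P 0 -> P n -> exists i, ~ P i /\ P (S i).
Proof.
  intros N0. induction n; intro Pn. contradiction.
  destruct (classic (P n)). auto. eauto.
Qed.

Lemma norm_cond (G : DefGroup) H K : subgroup G H -> subgroup G K -> nilpotent G K ->
  subset G H K -> ~ subset G K H -> exists x, K x /\ ~ H x /\ normalizer G H x.
Proof.
  intros SH SK [n Hn] HK NKH.
  destruct (first_fail (fun i => subset G (lcs G K i) H) n) as [i [Ni Pi]]; auto.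
  { intros g Lg. rewrite (Hn g Lg). apply sg_one; auto. }
  assert (key : forall a z, lcs G K i a -> H z -> H (conj G a z)).
  { intros a z La Hz. rewrite conj_as_comm. apply sg_mul; auto. apply sg_inv; auto.
    apply Pi. apply comm_lcs; auto. apply sg_inv; auto. apply lcs_sg; auto. }
  apply not_all_ex_not in Ni. destruct Ni as [x Nx].
  apply imply_to_and in Nx. destruct Nx as [Lx Nx].
  exists x. split. apply (lcs_sub G K i SK); auto. split; auto.
  intro z. split; auto. intro Hz. rewrite <- (conjVK G x z). apply key; auto.
  apply sg_inv; auto. apply lcs_sg; auto.
Qed.

Lemma norm_of (G : DefGroup) (A : gset G) g : (forall x, A x -> A (conj G g x)) ->
  (forall x, A x -> A (conj G (inv G g) x)) -> normalizer G A g.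
Proof. intros H1 H2 x. split; auto. intro Hx. apply H2 in Hx. rewrite conjVK in Hx. auto. Qed.

Lemma normE (G : DefGroup) (A : gset G) g x : normalizer G A g -> A x -> A (conj G g x).
Proof. intros N Ax. apply (N x). auto. Qed.

Lemma def_ext (G : DefGroup) (A B : gset G) : (forall x, A x <-> B x) -> definable G A -> definable G B.
Proof. intros E [phi [p Hp]]. exists phi, p. intro x. rewrite <- E. auto. Qed.

Lemma dhull_nil (G : DefGroup) (hdcc : DCC G) (H : gset G) : subgroup G H -> nilpotent G H ->
  exists D, def_subgroup G D /\ subset G H D /\ nilpotent G D.
Proof.
  intros SH [n Hn].
  pose (Dn := fun i => proj1_sig (constructive_indefinite_description _ (hull G hdcc (lcs G H i)))).
  assert (hD : forall i, def_subgroup G (Dn i) /\ subset G (lcs G H i) (Dn i) /\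
    forall K, def_subgroup G K -> subset G (lcs G H i) K -> subset G (Dn i) K).
  { intro i. exact (proj2_sig (constructive_indefinite_description _ (hull G hdcc (lcs G H i)))). }
  assert (SD : forall i, subgroup G (Dn i)) by (intro i; apply (hD i)).
  assert (HD0 : subset G H (Dn 0)) by apply (hD 0).
  assert (NH : forall i h, H h -> normalizer G (Dn i) h).
  { intros i h Hh. destruct (hD i) as [DDi [Li Mi]].
    assert (A : forall g, H g -> forall x, Dn i x -> Dn i (conj G g x)).
    { intros g Hg. apply (Mi (fun x => Dn i (conj G g x))). apply dsg_conj; auto.
      intros x Lx. apply Li. apply lcs_norm; auto. }
    apply norm_of; apply A; auto. apply sg_inv; auto. }
  assert (N1 : forall i d, Dn 0 d -> normalizer G (Dn i) d).
  { intros i. destruct (hD 0) as [DD0 [L0 M0]]. apply M0.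
    split. apply norm_sg. apply def_norm. apply (hD i).
    intros h Hh. apply NH; auto. }
  assert (S2 : forall i x y, lcs G H i x -> Dn 0 y -> Dn (S i) (comm G x y)).
  { intros i x y Lx Dy. destruct (hD 0) as [DD0 [L0 M0]].
    refine (proj2 (M0 (fun y => Dn 0 y /\ Dn (S i) (comm G x y)) _ _ y Dy)).
    - split.
      + split; [|split].
        * split. apply sg_one; auto. rewrite comm1r. apply sg_one; auto.
        * intros a b [Da Ca] [Db Cb]. split. apply sg_mul; auto.
          rewrite comm_mulr. apply sg_mul; auto.
          apply normE; auto. apply N1. apply sg_inv; auto.
        * intros a [Da Ca]. split. apply sg_inv; auto. rewrite comm_invr.
          apply normE. apply N1; auto. apply sg_inv; auto.
      + apply def_inter. apply DD0. apply def_commr. apply (hD (S i)).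
    - intros b Hb. split. apply HD0; auto. apply (proj1 (proj2 (hD (S i)))). apply comm_lcs; auto. }
  assert (S3 : forall i x y, Dn i x -> Dn 0 y -> Dn (S i) (comm G x y)).
  { intros i x y Dx Dy. destruct (hD i) as [DDi [Li Mi]].
    refine (proj2 (Mi (fun x => Dn 0 x /\ Dn (S i) (comm G x y)) _ _ x Dx)).
    - split.
      + split; [|split].
        * split. apply sg_one; auto. rewrite comm1l. apply sg_one; auto.
        * intros a b [Da Ca] [Db Cb]. split. apply sg_mul; auto.
          rewrite comm_mull. apply sg_mul; auto.
          apply normE; auto. apply N1. apply sg_inv; auto.
        * intros a [Da Ca]. split. apply sg_inv; auto. rewrite comm_invl.
          apply normE. apply N1; auto. apply sg_inv; auto.
      + apply def_inter. apply (hD 0). apply def_comml. apply (hD (S i)).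
    - intros b Lb. split. apply HD0. apply (lcs_sub G H i SH); auto. apply S2; auto. }
  assert (S4 : forall i, subset G (lcs G (Dn 0) i) (Dn i)).
  { induction i; simpl. intros x; auto.
    apply gen_sub; auto. intros g [x [y [Lx [Dy E]]]]. subst. apply S3; auto. }
  exists (Dn 0). split. apply hD. split; auto.
  exists n. intros g Lg. apply S4 in Lg.
  destruct (hD n) as [_ [Ln Mn]].
  apply (Mn (fun x => x = one G)); auto.
  - split. split; [|split]; intros; subst; auto. apply mul1g. apply inv1. apply def_one.
Qed.

Definition cnt (G : DefGroup) (P : G -> Prop) (s : list G) : nat :=
  length (filter (fun g => if excluded_middle_informative (P g) then true else false) s).

Lemma cnt_mono (G : DefGroup) (P P' : G -> Prop) s : (forall g, P g -> P' g) -> cnt G P s <= cnt G P' s.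
Proof.
  intro H. unfold cnt. induction s; simpl; auto.
  destruct (excluded_middle_informative (P a)), (excluded_middle_informative (P' a)); simpl; try lia.
  exfalso; auto.
Qed.

Lemma cnt_strict (G : DefGroup) (P P' : G -> Prop) s : (forall g, P g -> P' g) ->
  (exists g, In g s /\ P' g /\ ~ P g) -> cnt G P s < cnt G P' s.
Proof.
  intros H [g [Ig [P'g Pg]]]. induction s; simpl in *. contradiction.
  pose proof (cnt_mono G P P' s H) as M. unfold cnt in *. simpl.
  destruct Ig as [E|Ig].
  - subst. destruct (excluded_middle_informative (P g)), (excluded_middle_informative (P' g)); simpl; try contradiction; lia.
  - specialize (IHs Ig).
    destruct (excluded_middle_informative (P a)), (excluded_middle_informative (P' a)); simpl; try lia.
    exfalso; auto.
Qed.

Lemma cnt_le (G : DefGroup) P s : cnt G P s <= length s.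
Proof. unfold cnt. apply filter_length_le. Qed.

Lemma max_measure (T : Type) (F : T -> Prop) (m : T -> nat) B : (exists K, F K) ->
  (forall K, F K -> m K <= B) -> exists K, F K /\ forall K', F K' -> m K' <= m K.
Proof.
  intros [K0 F0] HB. apply NNPP; intro N.
  assert (step : forall K, F K -> exists K', F K' /\ m K < m K').
  { intros K FK. apply NNPP; intro N2. apply N. exists K. split; auto.
    intros K' FK'. apply NNPP; intro N3. apply N2. exists K'. split; auto. lia. }
  assert (A : forall j, exists K, F K /\ j <= m K).
  { induction j. exists K0; split; auto; lia.
    destruct IHj as [K [FK Hj]]. destruct (step K FK) as [K' [FK' H']]. exists K'; split; auto; lia. }
  destruct (A (S B)) as [K [FK HK]]. specialize (HB K FK). lia.
Qed.

Theorem lemma2p4 (G : DefGroup) (hdcc : DCC G) :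
  (* (a) *)
  (forall Q : gset G, max_nilpotent G Q -> definable G Q) /\
  (* (a') *)
  (forall Q : gset G, Cartan G Q ->
     definable G Q /\ exists Q0, conn_comp G Q Q0 /\ Carter G Q0) /\
  (* (b) *)
  (forall Q : gset G, Carter G Q ->
     (exists Qt, max_nilpotent G Qt /\ subset G Q Qt) /\
     (forall Qt, max_nilpotent G Qt -> subset G Q Qt ->
        Cartan G Qt /\ conn_comp G Qt Q)).
Proof.
  assert (PA : forall Q : gset G, max_nilpotent G Q -> definable G Q).
  { intros Q [SQ [NQ Qmax]]. destruct (dhull_nil G hdcc Q SQ NQ) as [D [[SD DD] [QD ND]]].
    specialize (Qmax D SD ND QD). apply (def_ext G D); auto. intro x; split; auto. }
  split; [exact PA|split].
  - intros Q [MQ Ccond]. pose proof (PA Q MQ) as DQ. destruct MQ as [SQ [NQ Qmax]].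
    split; auto.
    destruct (conn_exists G hdcc Q (Logic.conj SQ DQ)) as [Q0 HQ0].
    exists Q0. split; auto. pose proof HQ0 as CQ0.
    destruct HQ0 as [[SQ0 DQ0] [FQ0 Q0min]].
    split; [split; auto|split; [|split]].
    + split. split; auto. split. apply fi_refl; auto.
      intros K DK FK. apply Q0min; auto. eapply fi_trans; eauto.
    + apply (nil_sub G Q0 Q); auto. apply FQ0.
    + apply Ccond; auto. split. apply FQ0.
      intros h x Hh Hx. apply normE; auto. apply (conn_norm G Q Q0 h SQ CQ0).
      apply sg_in_norm; auto.
  - intros Q [[SQ DQ] [Qconn [NQ FQ]]].
    destruct Qconn as [_ [_ Qmin]].
    assert (KN : forall K, subgroup G K -> nilpotent G K -> subset G Q K -> subset G K (normalizer G Q)).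
    { intros K SK NK QK.
      set (N1 := fun x => K x /\ normalizer G Q x).
      assert (SN1 : subgroup G N1) by (apply sg_inter; auto; apply norm_sg).
      assert (QN1 : subset G Q N1) by (intros x Qx; split; auto; apply sg_in_norm; auto).
      assert (N1N : subset G N1 (normalizer G Q)) by (intros x [_ h]; auto).
      enough (subset G K N1) by (intros x Kx; apply H; auto).
      apply NNPP; intro Nsub.
      destruct (norm_cond G N1 K SN1 SK NK) as [x [Kx [Nx Nx1]]]; auto.
      { intros y [? ?]; auto. }
      apply Nx. split; auto.
      apply (conn_norm G N1 Q x SN1); auto.
      split. split; auto. split. apply (fi_sub G Q (normalizer G Q) N1); auto.
      intros K' DK' FK' y Qy.
      assert (E : subset G Q (fun x => K' x /\ Q x)).
      { apply Qmin. apply dsg_inter; auto. split; auto.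
        apply (fi_restrict G K' N1 Q); auto. apply DK'. }
      apply E; auto. }
    split.
    + destruct FQ as [_ [s [ins cov]]].
      destruct (max_measure (gset G) (fun K => subgroup G K /\ nilpotent G K /\ subset G Q K)
                  (fun K => cnt G K s) (length s)) as [Qt [[SQt [NQt QQt]] Qtmax]].
      * exists Q. split; auto. split; auto. intros x; auto.
      * intros K _. apply cnt_le.
      * exists Qt. split; auto. split; auto. split; auto.
        intros K SK NK QtK. intros k Kk. apply NNPP; intro Nk.
        assert (QK : subset G Q K) by (intros x Qx; auto).
        destruct (cov k) as [g [Ig Qg]]. apply (KN K SK NK QK); auto.
        assert (Kg : K g).
        { replace g with (mul G k (inv G (mul G (inv G g) k))) by (gsimpl; auto).
          apply sg_mul; auto. apply sg_inv; auto. }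
        assert (Ng : ~ Qt g).
        { intro Qtg. apply Nk. replace k with (mul G g (mul G (inv G g) k)) by (gsimpl; auto).
          apply sg_mul; auto. }
        specialize (Qtmax K (Logic.conj SK (Logic.conj NK QK))).
        pose proof (cnt_strict G Qt K s QtK (ex_intro _ g (Logic.conj Ig (Logic.conj Kg Ng)))). lia.
    + intros Qt MQt QQt. pose proof (PA Qt MQt) as DQt.
      destruct MQt as [SQt [NQt Qtmax]].
      assert (QtN : subset G Qt (normalizer G Q)) by (apply KN; auto).
      assert (FQQt : finite_index G Q Qt) by (apply (fi_sub G Q (normalizer G Q) Qt); auto).
      assert (CQt : conn_comp G Qt Q).
      { split. split; auto. split; auto. intros K DK FK y Qy.
        assert (E : subset G Q (fun x => K x /\ Q x)).
        { apply Qmin. apply dsg_inter; auto. split; auto.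
          apply (fi_restrict G K Qt Q); auto. apply DK. }
        apply E; auto. }
      split; auto. split. split; auto.
      intros X SX [XQt _] FX.
      destruct (hull G hdcc X) as [DX [[SDX DDX] [XDX DXmin]]].
      assert (DXQt : subset G DX Qt) by (apply DXmin; auto; split; auto).
      assert (FDX : finite_index G DX Qt) by (apply (fi_super G X DX Qt); auto).
      assert (QDX : subset G Q DX) by (apply CQt; auto; split; auto).
      assert (CDX : conn_comp G DX Q).
      { split. split; auto. split. apply (fi_sub G Q Qt DX); auto.
        intros K DK FK. apply CQt; auto. apply (fi_trans G K DX Qt); auto. }
      assert (NXN : subset G (normalizer G X) (normalizer G Q)).
      { intros g Ng. apply (conn_norm G DX Q g SDX CDX).
        assert (A : forall h, normalizer G X h -> forall x, DX x -> DX (conj G h x)).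
        { intros h Nh. apply (DXmin (fun x => DX (conj G h x))). apply dsg_conj; split; auto.
          intros x Xx. apply XDX. apply (Nh x); auto. }
        apply norm_of; apply A; auto. apply sg_inv; auto. apply norm_sg. }
      assert (FQtN : finite_index G Qt (normalizer G Q)) by (apply (fi_super G Q Qt); auto).
      assert (FXN : finite_index G X (normalizer G Q)) by (apply (fi_trans G X Qt); auto; apply norm_sg).
      apply (fi_sub G X (normalizer G Q)); auto. apply norm_sg. apply sg_in_norm; auto.
Qed.
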